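(* Let $\mathcal{H}=\mathbb{C}^2$ and let $\mathcal{UE}$ be the set of unital entanglement breaking quantum channels on $\mathcal{L}(\mathcal{H})$. For every density operator $\tau$ on $\mathcal{H}\otimes\mathcal{H}$, $$C(\tau,\mathcal{UE})=\max_{\Psi\in\mathcal{UE}}\operatorname{tr}[\tau J_\Psi]\le\frac12\left(1+\|N(\tau)\|\right),$$ where $\|N(\tau)\|=\max_{\boldsymbol{x}\in\mathbb{R}^3,\|\boldsymbol{x}\|=1}\|N(\tau)\boldsymbol{x}\|$ is the operator norm induced by the Euclidean norm.
   Context: A quantum channel is a linear, completely positive, trace preserving map $\Psi:\mathcal{L}(\mathcal{H})\to\mathcal{L}(\mathcal{H})$; it is unital if $\Psi(I)=I$, and entanglement breaking if $(\mathrm{id}\otimes\Psi)(\rho)$ is separable for every density operator $\rho$ on $\mathcal{H}\otimes\mathcal{H}$. $\{|0\rangle,|1\rangle\}$ is the computational basis; $J_\Psi=(\mathrm{id}\otimes\Psi)(P'_+)$ with $P'_+=\sum_{i,j=0}^1|i\rangle\langle j|\otimes|i\rangle\langle j|$. The correlation matrix is $N(X)_{ij}=\operatorname{tr}[X(\sigma_i\otimes\sigma_j)]$, $i,j\in\{1,2,3\}$, with $\sigma_i$ the Pauli matrices. *)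

(* Defs.v *)
From HB Require Import structures.
From mathcomp Require Import all_boot all_order all_algebra.
From mathcomp Require Export complex mxtens.
From mathcomp Require Export boolp classical_sets reals.
Set Implicit Arguments.
Unset Strict Implicit.
Unset Printing Implicit Defensive.
Import Order.TTheory GRing.Theory Num.Theory.
Local Open Scope ring_scope.
Local Open Scope classical_set_scope.

Section QuantumDefs.
Variable R : realType.
Local Notation C := (R[i]).

Definition adjmx m n (A : 'M[C]_(m, n)) : 'M[C]_(n, m) := (map_mx Num.conj A)^T.

(* positive semidefinite: <v, A v> >= 0 for all v (in C, 0 <= z means z real, z >= 0) *)
Definition psd n (A : 'M[C]_n) : Prop :=
  forall v : 'cV[C]_n, 0 <= (adjmx v *m A *m v) 0 0.

Definition density n (A : 'M[C]_n) : Prop := psd A /\ \tr A = 1.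

(* (id_n (x) Psi) acting on L(C^n (x) C^2) = 'M_(n*2), with the tensor index
   convention of mxtens (first factor = outer index) *)
Definition lift_map n (Psi : 'M[C]_2 -> 'M[C]_2) (X : 'M[C]_(n * 2)) : 'M[C]_(n * 2) :=
  \matrix_(k, l)
    Psi (\matrix_(a < 2, b < 2)
           X (mxtens_index ((mxtens_unindex k).1, a))
             (mxtens_index ((mxtens_unindex l).1, b)))
        (mxtens_unindex k).2 (mxtens_unindex l).2.

Definition is_linear_map (Psi : 'M[C]_2 -> 'M[C]_2) : Prop :=
  forall (a : C) (X Y : 'M[C]_2), Psi (a *: X + Y) = a *: Psi X + Psi Y.

Definition completely_positive (Psi : 'M[C]_2 -> 'M[C]_2) : Prop :=
  forall n (X : 'M[C]_(n * 2)), psd X -> psd (lift_map Psi X).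

Definition trace_preserving (Psi : 'M[C]_2 -> 'M[C]_2) : Prop :=
  forall X : 'M[C]_2, \tr (Psi X) = \tr X.

Definition quantum_channel (Psi : 'M[C]_2 -> 'M[C]_2) : Prop :=
  [/\ is_linear_map Psi, completely_positive Psi & trace_preserving Psi].

Definition unital (Psi : 'M[C]_2 -> 'M[C]_2) : Prop := Psi 1%:M = 1%:M.

Definition separable (X : 'M[C]_(2 * 2)) : Prop :=
  exists (m : nat) (p : 'I_m -> C) (s w : 'I_m -> 'M[C]_2),
    [/\ forall k, 0 <= p k,
        forall k, density (s k) /\ density (w k)
      & X = \sum_(k < m) p k *: (s k *t w k)].

Definition entanglement_breaking (Psi : 'M[C]_2 -> 'M[C]_2) : Prop :=
  forall rho : 'M[C]_(2 * 2), density rho -> separable (lift_map Psi rho).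

Definition Pplus : 'M[C]_(2 * 2) :=
  \sum_(i < 2) \sum_(j < 2) (delta_mx i j *t delta_mx i j).

Definition choi (Psi : 'M[C]_2 -> 'M[C]_2) : 'M[C]_(2 * 2) := lift_map Psi Pplus.

Definition sigma1 : 'M[C]_2 := \matrix_(a < 2, b < 2) (if a == b then 0 else 1).
Definition sigma2 : 'M[C]_2 :=
  \matrix_(a < 2, b < 2)
    (if a == b then 0 else if (a : nat) == 0%N then - 'i%C else 'i%C).
Definition sigma3 : 'M[C]_2 :=
  \matrix_(a < 2, b < 2)
    (if a == b then (if (a : nat) == 0%N then 1 else -1) else 0).
Definition pauli (k : 'I_3) : 'M[C]_2 :=
  if (k : nat) == 0%N then sigma1 else if (k : nat) == 1%N then sigma2 else sigma3.

(* correlation matrix N(X)_{ij} = tr[X (sigma_i (x) sigma_j)] (real part; it is real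
   for Hermitian X) *)
Definition corr (X : 'M[C]_(2 * 2)) : 'M[R]_3 :=
  \matrix_(i, j) complex.Re (\tr (X *m (pauli i *t pauli j))).

Definition eucl (v : 'cV[R]_3) : R := Num.sqrt (\sum_(i < 3) v i 0 ^+ 2).

Definition opnorm (M : 'M[R]_3) : R :=
  sup [set eucl (M *m x) | x in [set x : 'cV[R]_3 | eucl x = 1]].

End QuantumDefs.

(* Main.v *)
Require Import Defs.
From HB Require Import structures.
From mathcomp Require Import all_boot all_order all_algebra.
From mathcomp Require Import complex mxtens reals.
From mathcomp Require Import ring lra.
Import Order.TTheory GRing.Theory Num.Theory.
Local Open Scope ring_scope.
Set Implicit Arguments.
Unset Strict Implicit.
Unset Printing Implicit Defensive.

Section RealPart.
Variable R : realType.

Lemma cs3 (a0 a1 a2 c0 c1 c2 : R) :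
  (a0*c0 + a1*c1 + a2*c2)^+2 <= (a0^+2+a1^+2+a2^+2)*(c0^+2+c1^+2+c2^+2).
Proof.
rewrite -subr_ge0.
have -> : (a0^+2+a1^+2+a2^+2)*(c0^+2+c1^+2+c2^+2) - (a0*c0 + a1*c1 + a2*c2)^+2
  = (a0*c1-a1*c0)^+2 + (a0*c2-a2*c0)^+2 + (a1*c2-a2*c1)^+2 by ring.
by rewrite !addr_ge0 ?sqr_ge0.
Qed.

Lemma sum3 (F : 'I_3 -> R) : \sum_(i < 3) F i = F 0 + F 1 + F 2%:R.
Proof. rewrite !big_ord_recr big_ord0 /= GRing.add0r. by congr (F _ + F _ + F _); apply: val_inj. Qed.

Lemma euclE (v : 'cV[R]_3) : eucl v = Num.sqrt (v 0 0 ^+2 + v 1 0 ^+2 + v 2%:R 0 ^+2).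
Proof. by rewrite /eucl sum3. Qed.

Lemma mulmx3E (N : 'M[R]_3) (x : 'cV[R]_3) i :
  (N *m x) i 0 = N i 0 * x 0 0 + N i 1 * x 1 0 + N i 2%:R * x 2%:R 0.
Proof. by rewrite mxE sum3. Qed.

Lemma le_sqrt_of_sq (x S : R) : 0 <= S -> x^+2 <= S -> x <= Num.sqrt S.
Proof.
move=> S0 h; case: (lerP x 0) => hx; first by apply: le_trans hx (sqrtr_ge0 _).
by rewrite -(ger0_norm (ltW hx)) -sqrtr_sqr ler_sqrt.
Qed.

Lemma opnorm_bounded (N : 'M[R]_3) :
  has_ubound [set eucl (N *m x) | x in [set x : 'cV[R]_3 | eucl x = 1]].
Proof.
set K := \sum_(i < 3) \sum_(j < 3) N i j ^+ 2.
exists (Num.sqrt K) => y [x /= hx <-].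
have hx2 : x 0 0 ^+2 + x 1 0 ^+2 + x 2%:R 0 ^+2 = 1.
  move: hx; rewrite euclE => h.
  have := @sqr_sqrtr _ (x 0 0 ^+2 + x 1 0 ^+2 + x 2%:R 0 ^+2).
  rewrite h expr1n => <- //; by rewrite !addr_ge0 ?sqr_ge0.
have K0 : 0 <= K by apply: sumr_ge0 => i _; apply: sumr_ge0 => j _; apply: sqr_ge0.
rewrite euclE ler_sqrt // /K sum3 !sum3 !mulmx3E.
have H := fun i => cs3 (N i 0) (N i 1) (N i 2%:R) (x 0 0) (x 1 0) (x 2%:R 0).
rewrite hx2 in H.
have := H 0; have := H 1; have := H 2%:R. rewrite !mulr1. lra.
Qed.

Lemma eucl_ge0 (v : 'cV[R]_3) : 0 <= eucl v.
Proof. exact: sqrtr_ge0. Qed.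

Lemma opnorm_ub (N : 'M[R]_3) x : eucl x = 1 -> eucl (N *m x) <= opnorm N.
Proof.
move=> hx; apply: (ub_le_sup (opnorm_bounded N)); by exists x.
Qed.

Lemma opnorm_ge0 (N : 'M[R]_3) : 0 <= opnorm N.
Proof.
apply: le_trans (eucl_ge0 (N *m delta_mx 0 0)) _; apply: opnorm_ub.
rewrite euclE !mxE /=; by rewrite expr1n !expr0n /= !addr0 sqrtr1.
Qed.

Lemma euclZ (k : R) v : eucl (k *: v) = `|k| * eucl v.
Proof.
rewrite !euclE !mxE -sqrtr_sqr -sqrtrM ?sqr_ge0 //; congr Num.sqrt; ring.
Qed.

Lemma opnorm_ub_le (N : 'M[R]_3) b : eucl b <= 1 -> eucl (N *m b) <= opnorm N.
Proof.
move=> hb; have [e0|epos] := eqVneq (eucl b) 0.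
  have hb0 : b = 0.
    move: e0; rewrite euclE => /eqP; rewrite sqrtr_eq0 => hs.
    have h0 := sqr_ge0 (b 0 0); have h1 := sqr_ge0 (b 1 0); have h2 := sqr_ge0 (b 2%:R 0).
    have z0 : b 0 0 ^+ 2 = 0 by lra.
    have z1 : b 1 0 ^+ 2 = 0 by lra.
    have z2 : b 2%:R 0 ^+ 2 = 0 by lra.
    apply/matrixP => i j; rewrite (ord1 j) mxE.
    case: i => [[|[|[|//]]] hi].
    - by apply/eqP; rewrite -sqrf_eq0; apply/eqP; rewrite -z0; congr (b _ _ ^+ 2); apply: val_inj.
    - by apply/eqP; rewrite -sqrf_eq0; apply/eqP; rewrite -z1; congr (b _ _ ^+ 2); apply: val_inj.
    - by apply/eqP; rewrite -sqrf_eq0; apply/eqP; rewrite -z2; congr (b _ _ ^+ 2); apply: val_inj.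
  by rewrite hb0 mulmx0 -(scale0r (0 : 'cV[R]_3)) euclZ normr0 mul0r opnorm_ge0.
have ep : 0 < eucl b by rewrite lt_def epos eucl_ge0.
have h1 : eucl ((eucl b)^-1 *: b) = 1.
  by rewrite euclZ ger0_norm ?invr_ge0 ?eucl_ge0 // mulVf.
have := opnorm_ub N h1; rewrite -scalemxAr euclZ ger0_norm ?invr_ge0 ?eucl_ge0 //.
move=> h; apply: le_trans h.
rewrite -{1}(mul1r (eucl (N *m b))) ler_wpM2r ?eucl_ge0 //.
by rewrite -invr1 lef_pV2 ?posrE // ltr01.
Qed.

Lemma bilin_le (N : 'M[R]_3) (a b : 'cV[R]_3) :
  eucl a <= 1 -> eucl b <= 1 ->
  \sum_(i < 3) \sum_(j < 3) a i 0 * b j 0 * N i j <= opnorm N.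
Proof.
move=> ha hb; apply: (le_trans _ (opnorm_ub_le N hb)).
have -> : \sum_(i < 3) \sum_(j < 3) a i 0 * b j 0 * N i j
   = a 0 0 * (N *m b) 0 0 + a 1 0 * (N *m b) 1 0 + a 2%:R 0 * (N *m b) 2%:R 0.
  rewrite !mulmx3E sum3 !sum3; ring.
have ha2 : a 0 0 ^+2 + a 1 0 ^+2 + a 2%:R 0 ^+2 <= 1.
  by move: ha; rewrite euclE -[X in _ <= X]sqrtr1 ler_sqrt ?ler01.
rewrite [eucl (N *m b)]euclE; apply: le_sqrt_of_sq.
  by rewrite !addr_ge0 ?sqr_ge0.
apply: le_trans (cs3 _ _ _ _ _ _) _.
rewrite -{2}(mul1r (_ + _ + (N *m b) 2%:R 0 ^+ 2)) ler_wpM2r //.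
by rewrite !addr_ge0 ?sqr_ge0.
Qed.
End RealPart.

Section Cplx.
Variable R : realType.
Local Notation C := (R[i]).

Lemma cext (x y : C) : complex.Re x = complex.Re y -> complex.Im x = complex.Im y -> x = y.
Proof. by case: x => a b; case: y => c d /= -> ->. Qed.
Lemma ReM (x y : C) : complex.Re (x * y) = complex.Re x * complex.Re y - complex.Im x * complex.Im y.
Proof. by case: x => a b; case: y => c d. Qed.
Lemma ImM (x y : C) : complex.Im (x * y) = complex.Re x * complex.Im y + complex.Im x * complex.Re y.
Proof. by case: x => a b; case: y => c d. Qed.
Lemma ReD (x y : C) : complex.Re (x + y) = complex.Re x + complex.Re y.
Proof. by case: x => a b; case: y => c d. Qed.
Lemma ImD (x y : C) : complex.Im (x + y) = complex.Im x + complex.Im y.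
Proof. by case: x => a b; case: y => c d. Qed.
Lemma ReN (x : C) : complex.Re (- x) = - complex.Re x.
Proof. by case: x => a b. Qed.
Lemma ImN (x : C) : complex.Im (- x) = - complex.Im x.
Proof. by case: x => a b. Qed.
Lemma ReB (x y : C) : complex.Re (x - y) = complex.Re x - complex.Re y.
Proof. by rewrite ReD ReN. Qed.
Lemma ImB (x y : C) : complex.Im (x - y) = complex.Im x - complex.Im y.
Proof. by rewrite ImD ImN. Qed.
Lemma ReJ (x : C) : complex.Re (Num.conj x) = complex.Re x.
Proof. by case: x => a b. Qed.
Lemma ImJ (x : C) : complex.Im (Num.conj x) = - complex.Im x.
Proof. by case: x => a b. Qed.
Lemma Rei : complex.Re ('i%C : C) = 0. Proof. by []. Qed.
Lemma Imi : complex.Im ('i%C : C) = 1. Proof. by []. Qed.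
Lemma ReC (r : R) : complex.Re (r%:C%C : C) = r. Proof. by []. Qed.
Lemma ImC (r : R) : complex.Im (r%:C%C : C) = 0. Proof. by []. Qed.
Lemma Re0 : complex.Re (0 : C) = 0. Proof. by []. Qed.
Lemma Im0 : complex.Im (0 : C) = 0. Proof. by []. Qed.
Lemma Re1 : complex.Re (1 : C) = 1. Proof. by []. Qed.
Lemma Im1 : complex.Im (1 : C) = 0. Proof. by []. Qed.
Lemma Ren n : complex.Re (n%:R : C) = n%:R.
Proof. elim: n => [//|n IH]; by rewrite -addn1 !natrD ReD IH. Qed.
Lemma Imn n : complex.Im (n%:R : C) = 0.
Proof. elim: n => [//|n IH]; by rewrite -addn1 !natrD ImD IH Im1 addr0. Qed.
Lemma conjC_ (x : C) : Num.conj x = conjc x. Proof. by []. Qed.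

Definition cE := (ReM, ImM, ReD, ImD, ReN, ImN, ReJ, ImJ, Rei, Imi, ReC, ImC,
  Re0, Im0, Re1, Im1, Ren, Imn).

Lemma ge0C (x : C) : 0 <= x -> complex.Im x = 0 /\ 0 <= complex.Re x.
Proof. by rewrite lecE => /andP[/eqP h1 h2]; split. Qed.

Lemma ge0_real (x : C) : 0 <= x -> x = (complex.Re x)%:C%C.
Proof. by move=> /ge0C [h _]; apply: cext => //; rewrite h. Qed.

Lemma adjmxD n (u w : 'cV[C]_n) (c : C) :
  adjmx (u + c *: w) = adjmx u + Num.conj c *: adjmx w.
Proof. by apply/matrixP => i j; rewrite !mxE rmorphD rmorphM. Qed.

Lemma adjmx_delta n (i : 'I_n) : adjmx (delta_mx i 0) = delta_mx 0 i :> 'rV[C]_n.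
Proof.
apply/matrixP => a b; rewrite !mxE (ord1 a) /=.
by case: (b == i); rewrite /= ?rmorph1 ?rmorph0.
Qed.

Lemma dd n (A : 'M[C]_n) i j : (@delta_mx C 1 n 0 i *m A *m @delta_mx C n 1 j 0) 0 0 = A i j.
Proof. by rewrite -rowE -colE !mxE. Qed.

Lemma entD m n (A B : 'M[C]_(m,n)) i j : (A + B) i j = A i j + B i j.
Proof. by rewrite mxE. Qed.
Lemma entZ m n (c : C) (A : 'M[C]_(m,n)) i j : (c *: A) i j = c * A i j.
Proof. by rewrite mxE. Qed.

Lemma qform n (A : 'M[C]_n) i j (c : C) :
  (adjmx (@delta_mx C n 1 i 0 + c *: @delta_mx C n 1 j 0) *m A *m (@delta_mx C n 1 i 0 + c *: @delta_mx C n 1 j 0)) 0 0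
  = A i i + c * A i j + Num.conj c * A j i + Num.conj c * c * A j j.
Proof.
rewrite adjmxD !adjmx_delta !mulmxDr !mulmxDl. rewrite -!(scalemxAl). rewrite -[_ *m (c *: _)]scalemxAr -[_ *m (c *: _)]scalemxAr.
rewrite !entD !entZ !dd. ring.
Qed.

Definition herm n (A : 'M[C]_n) := forall i j, A j i = Num.conj (A i j).

Lemma psd_herm n (A : 'M[C]_n) : psd A -> herm A.
Proof.
move=> hA i j.
have h0 := hA (@delta_mx C n 1 i 0 + 0 *: @delta_mx C n 1 j 0).
have h0' := hA (@delta_mx C n 1 j 0 + 0 *: @delta_mx C n 1 i 0).
have h1 := hA (@delta_mx C n 1 i 0 + 1 *: @delta_mx C n 1 j 0).
have h2 := hA (@delta_mx C n 1 i 0 + 'i%C *: @delta_mx C n 1 j 0).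
rewrite qform in h0; rewrite qform in h0'; rewrite qform in h1; rewrite qform in h2.
move: h0 h0' h1 h2 => /ge0C[h0 _] /ge0C[h0' _] /ge0C[h1 _] /ge0C[h2 _].
move: h0 h0' h1 h2; rewrite !cE /= => h0 h0' h1 h2.
apply: cext; rewrite !cE; lra.
Qed.


Local Notation idx := mxtens_index.

Lemma sum_tens m n (G : 'I_(m * n) -> C) :
  \sum_k G k = \sum_(a < m) \sum_(b < n) G (idx (a, b)).
Proof.
rewrite (reindex (@mxtens_index m n)) /=; last first.
  by exists (@mxtens_unindex m n) => x _; [apply: mxtens_indexK | apply: mxtens_unindexK].
rewrite pair_big /=; by apply: eq_bigr => [[a b]].
Qed.

Section Tens.
Variables m n p q : nat.
Implicit Types (X Y : 'M[C]_(m, n)) (Z W : 'M[C]_(p, q)).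

Lemma tensDl X Y Z : (X + Y) *t Z = X *t Z + Y *t Z.
Proof.
apply/matrixP => kk ll; rewrite -[kk]mxtens_unindexK -[ll]mxtens_unindexK.
move: (mxtens_unindex kk) (mxtens_unindex ll) => [a b] [c d].
by rewrite entD !tensmxE entD mulrDl.
Qed.
Lemma tensDr X Z W : X *t (Z + W) = X *t Z + X *t W.
Proof.
apply/matrixP => kk ll; rewrite -[kk]mxtens_unindexK -[ll]mxtens_unindexK.
move: (mxtens_unindex kk) (mxtens_unindex ll) => [a b] [c d].
by rewrite entD !tensmxE entD mulrDr.
Qed.
Lemma tensZl k X Z : (k *: X) *t Z = k *: (X *t Z).
Proof.
apply/matrixP => kk ll; rewrite -[kk]mxtens_unindexK -[ll]mxtens_unindexK.
move: (mxtens_unindex kk) (mxtens_unindex ll) => [a b] [c d].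
by rewrite entZ !tensmxE entZ mulrA.
Qed.
Lemma tensZr k X Z : X *t (k *: Z) = k *: (X *t Z).
Proof.
apply/matrixP => kk ll; rewrite -[kk]mxtens_unindexK -[ll]mxtens_unindexK.
move: (mxtens_unindex kk) (mxtens_unindex ll) => [a b] [c d].
by rewrite entZ !tensmxE entZ mulrCA.
Qed.
Lemma tens_suml r (Xs : 'I_r -> 'M[C]_(m, n)) Z :
  (\sum_(k < r) Xs k) *t Z = \sum_(k < r) (Xs k *t Z).
Proof.
apply/matrixP => kk ll; rewrite -[kk]mxtens_unindexK -[ll]mxtens_unindexK.
move: (mxtens_unindex kk) (mxtens_unindex ll) => [a b] [c d].
rewrite tensmxE !summxE mulr_suml; apply: eq_bigr => k _; by rewrite tensmxE.
Qed.
Lemma tens_sumr r X (Zs : 'I_r -> 'M[C]_(p, q)) :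
  X *t (\sum_(k < r) Zs k) = \sum_(k < r) (X *t Zs k).
Proof.
apply/matrixP => kk ll; rewrite -[kk]mxtens_unindexK -[ll]mxtens_unindexK.
move: (mxtens_unindex kk) (mxtens_unindex ll) => [a b] [c d].
rewrite tensmxE !summxE mulr_sumr; apply: eq_bigr => k _; by rewrite tensmxE.
Qed.
End Tens.

Section F.
Variable tau : 'M[C]_(2 * 2).
Definition F (X Y : 'M[C]_2) := \tr (tau *m (X *t Y)).
Lemma FDl X X' Y : F (X + X') Y = F X Y + F X' Y.
Proof. by rewrite /F tensDl mulmxDr mxtraceD. Qed.
Lemma FDr X Y Y' : F X (Y + Y') = F X Y + F X Y'.
Proof. by rewrite /F tensDr mulmxDr mxtraceD. Qed.
Lemma FZl k X Y : F (k *: X) Y = k * F X Y.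
Proof. by rewrite /F tensZl -scalemxAr mxtraceZ. Qed.
Lemma FZr k X Y : F X (k *: Y) = k * F X Y.
Proof. by rewrite /F tensZr -scalemxAr mxtraceZ. Qed.
Lemma Fsuml r (Xs : 'I_r -> 'M[C]_2) Y : F (\sum_(k < r) Xs k) Y = \sum_(k < r) F (Xs k) Y.
Proof. by rewrite /F tens_suml mulmx_sumr raddf_sum. Qed.
Lemma Fsumr r X (Ys : 'I_r -> 'M[C]_2) : F X (\sum_(k < r) Ys k) = \sum_(k < r) F X (Ys k).
Proof. by rewrite /F tens_sumr mulmx_sumr raddf_sum. Qed.
Lemma F0l Y : F 0 Y = 0.
Proof. by rewrite /F tens0mx mulmx0 mxtrace0. Qed.
End F.

Lemma tens11 : (1%:M : 'M[C]_2) *t (1%:M : 'M[C]_2) = 1%:M.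
Proof.
apply/matrixP => kk ll; rewrite -[kk]mxtens_unindexK -[ll]mxtens_unindexK.
move: (mxtens_unindex kk) (mxtens_unindex ll) => [a b] [c d].
rewrite tensmxE !mxE.
have -> : (idx (a, b) == idx (c, d)) = (a == c) && (b == d).
  apply/eqP/andP => [h|[/eqP -> /eqP ->]] //.
  by have := congr1 (@mxtens_unindex 2 2) h; rewrite !mxtens_indexK => -[-> ->].
by case: (a == c); case: (b == d); rewrite /= ?mulr1 ?mulr0 ?mul0r.
Qed.

Lemma PplusE a b c d :
  Pplus R (idx (a, b)) (idx (c, d)) = ((a == b) && (c == d))%:R.
Proof.
rewrite /Pplus !summxE.
under eq_bigr do rewrite summxE.
under eq_bigr do under eq_bigr do rewrite tensmxE !mxE.
rewrite !big_ord_recr !big_ord0 /=.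
by case: a => [[|[|//]] ?]; case: b => [[|[|//]] ?]; case: c => [[|[|//]] ?];
  case: d => [[|[|//]] ?]; rewrite /= ?mulr1 ?mulr0 ?mul0r ?addr0 ?add0r ?GRing.add0r.
Qed.


Lemma sum2 (V : nmodType) (G : 'I_2 -> V) : \sum_(a < 2) G a = G 0 + G 1.
Proof. rewrite !big_ord_recr big_ord0 /= GRing.add0r. by congr (G _ + G _); apply: val_inj. Qed.

Lemma liftE (Psi : 'M[C]_2 -> 'M[C]_2) (X : 'M[C]_(2 * 2)) a b c d :
  lift_map Psi X (idx (a, c)) (idx (b, d))
  = Psi (\matrix_(x < 2, y < 2) X (idx (a, x)) (idx (b, y))) c d.
Proof. by rewrite /lift_map mxE !mxtens_indexK. Qed.

Lemma choiE (Psi : 'M[C]_2 -> 'M[C]_2) a b c d :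
  choi Psi (idx (a, c)) (idx (b, d)) = Psi (delta_mx a b) c d.
Proof.
rewrite /choi liftE; congr (Psi _ c d); apply/matrixP => x y; rewrite !mxE PplusE.
by rewrite (eq_sym a) (eq_sym b).
Qed.

Section Chan.
Variable Psi : 'M[C]_2 -> 'M[C]_2.
Hypothesis lin : is_linear_map Psi.

Lemma lin0 : Psi 0 = 0.
Proof.
have := lin 1 0 0; rewrite scaler0 addr0 scale1r.
by move/(congr1 (fun M => M - Psi 0)); rewrite addrK subrr => <-.
Qed.
Lemma linZ k X : Psi (k *: X) = k *: Psi X.
Proof. by have := lin k X 0; rewrite !addr0 lin0 addr0. Qed.
Lemma linD X Y : Psi (X + Y) = Psi X + Psi Y.
Proof. by have := lin 1 X Y; rewrite !scale1r. Qed.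

Lemma lift_mapZ k (X : 'M[C]_(2 * 2)) : lift_map Psi (k *: X) = k *: lift_map Psi X.
Proof.
apply/matrixP => kk ll; rewrite -[kk]mxtens_unindexK -[ll]mxtens_unindexK.
move: (mxtens_unindex kk) (mxtens_unindex ll) => [a b] [c d].
rewrite entZ !liftE -entZ -linZ; congr (Psi _ _ _).
by apply/matrixP => x y; rewrite !mxE.
Qed.
End Chan.

Lemma adjmx_mul m n p (A : 'M[C]_(m, n)) (B : 'M[C]_(n, p)) :
  adjmx (A *m B) = adjmx B *m adjmx A.
Proof.
apply/matrixP => i j; rewrite !mxE rmorph_sum; apply: eq_bigr => k _.
by rewrite !mxE rmorphM mulrC.
Qed.
Lemma adjmxK m n (A : 'M[C]_(m, n)) : adjmx (adjmx A) = A.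
Proof. by apply/matrixP => i j; rewrite !mxE; apply: conjcK. Qed.

Lemma mx11M m (A : 'M[C]_(1, m)) (B : 'M[C]_(m, 1)) (X : 'M[C]_(1,1)) (Y : 'M[C]_(1,1)) :
  (X *m Y) 0 0 = X 0 0 * Y 0 0.
Proof. by rewrite mxE big_ord1. Qed.

Lemma adjmxE m n (M : 'M[C]_(m, n)) i j : adjmx M j i = Num.conj (M i j).
Proof. by rewrite !mxE. Qed.

Definition uP : 'cV[C]_(2 * 2) :=
  \col_kk (((@mxtens_unindex 2 2 kk).1 == (mxtens_unindex kk).2)%:R).

Lemma Pplus_uu : Pplus R = uP *m adjmx uP.
Proof.
apply/matrixP => kk ll; rewrite -[kk]mxtens_unindexK -[ll]mxtens_unindexK.
move: (mxtens_unindex kk) (mxtens_unindex ll) => [a b] [c d].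
rewrite PplusE mxE big_ord1 !mxE !mxtens_indexK /= rmorph_nat.
by case: (a == b); case: (c == d); rewrite /= ?mulr1 ?mulr0 ?mul0r.
Qed.

Lemma psd_Pplus : psd ((2%:R)^-1 *: Pplus R).
Proof.
move=> v; rewrite -scalemxAr -scalemxAl entZ; apply: mulr_ge0.
  by rewrite invr_ge0 ler0n.
rewrite Pplus_uu !mulmxA -(mulmxA (adjmx v *m uP)).
rewrite (@mx11M 1 0 0) -[adjmx uP *m v](adjmxK) adjmx_mul adjmxK.
rewrite adjmxE; exact: mulcJ_ge0.
Qed.

Lemma tr_Pplus : \tr ((2%:R)^-1 *: Pplus R) = 1.
Proof.
rewrite mxtraceZ /mxtrace sum_tens !sum2 !PplusE /=.
rewrite addr0 GRing.add0r -natrD mulVf //.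
by rewrite pnatr_eq0.
Qed.

Lemma density_Pplus : density ((2%:R)^-1 *: Pplus R).
Proof. split; [exact: psd_Pplus | exact: tr_Pplus]. Qed.

Lemma decE m (q : 'I_m -> C) (s w : 'I_m -> 'M[C]_2) a b c d :
  (\sum_k q k *: (s k *t w k)) (idx (a, c)) (idx (b, d))
  = \sum_k q k * (s k a b * w k c d).
Proof. by rewrite summxE; apply: eq_bigr => k _; rewrite entZ tensmxE. Qed.

Lemma trE2 (X : 'M[C]_2) : \tr X = X 0 0 + X 1 1.
Proof. by rewrite /mxtrace sum2. Qed.

Lemma marginals (Psi : 'M[C]_2 -> 'M[C]_2) m (q : 'I_m -> C) (s w : 'I_m -> 'M[C]_2) :
  is_linear_map Psi -> trace_preserving Psi -> unital Psi ->
  (forall k, \tr (s k) = 1) -> (forall k, \tr (w k) = 1) ->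
  choi Psi = \sum_k q k *: (s k *t w k) ->
  \sum_k q k *: s k = 1%:M /\ \sum_k q k *: w k = 1%:M.
Proof.
move=> lin tp un ts tw hJ; split; apply/matrixP => x y; rewrite summxE.
- have := tp (delta_mx x y); rewrite /mxtrace.
  under eq_bigr do rewrite -choiE hJ decE.
  rewrite exchange_big /= => h.
  transitivity (\sum_(k < m) q k * s k x y * \tr (w k)).
    by apply: eq_bigr => k _; rewrite tw mulr1 entZ.
  rewrite /mxtrace; under eq_bigr do rewrite mulr_sumr.
  under eq_bigr do under eq_bigr do rewrite -mulrA.
  rewrite h sum2 !mxE; clear h; case: x => [[|[|//]] ?]; case: y => [[|[|//]] ?];
    by rewrite /= ?mulr1 ?mulr0 ?mul0r ?addr0 ?GRing.add0r.
- have E1 : \sum_(a < 2) (delta_mx a a : 'M[C]_2) = 1%:M.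
    apply/matrixP => i j; rewrite summxE sum2 !mxE.
    case: i => [[|[|//]] ?]; case: j => [[|[|//]] ?];
      by rewrite /= ?mulr1 ?mulr0 ?mul0r ?addr0 ?GRing.add0r.
  have h : \sum_(a < 2) choi Psi (idx (a, x)) (idx (a, y)) = (1%:M : 'M[C]_2) x y.
    by rewrite -un -E1 [in RHS]sum2 (linD lin) entD sum2 !choiE.
  rewrite -h; under [RHS]eq_bigr do rewrite hJ decE.
  rewrite exchange_big /=; apply: eq_bigr => k _.
  rewrite entZ -mulr_sumr; congr (_ * _).
  by rewrite -mulr_suml -/(\tr (s k)) ts mul1r.
Qed.


Lemma sum3C (V : nmodType) (G : 'I_3 -> V) : \sum_(i < 3) G i = G 0 + G 1 + G 2%:R.
Proof. rewrite !big_ord_recr big_ord0 /= GRing.add0r. by congr (G _ + G _ + G _); apply: val_inj. Qed.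

Lemma ord2E (a : 'I_2) : a = 0 \/ a = 1.
Proof. case: a => [[|[|//]] h]; [left|right]; exact: val_inj. Qed.

Definition bl (s : 'M[C]_2) : 'cV[R]_3 :=
  \col_(i < 3) (if (i : nat) == 0%N then 2 * complex.Re (s 1 0)
                else if (i : nat) == 1%N then 2 * complex.Im (s 1 0)
                else complex.Re (s 0 0) - complex.Re (s 1 1)).

Lemma herm2 (s : 'M[C]_2) : psd s ->
  [/\ complex.Im (s 0 0) = 0, complex.Im (s 1 1) = 0,
      complex.Re (s 0 1) = complex.Re (s 1 0) & complex.Im (s 0 1) = - complex.Im (s 1 0)].
Proof.
move=> /psd_herm h.
have h00 := h 0 0; have h11 := h 1 1; have h01 := h 1 0.
split.
- by have := congr1 (@complex.Im R) h00; rewrite ImJ => e; lra.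
- by have := congr1 (@complex.Im R) h11; rewrite ImJ => e; lra.
- by rewrite h01 ReJ.
- by rewrite h01 ImJ.
Qed.

Lemma bloch_decomp (s : 'M[C]_2) : density s ->
  2%:R *: s - 1%:M = \sum_(i < 3) ((bl s i 0)%:C)%C *: pauli R i.
Proof.
move=> [hp ht]; have [h1 h2 h3 h4] := herm2 hp.
move: ht; rewrite trE2 => ht.
have hr : complex.Re (s 0 0) + complex.Re (s 1 1) = 1.
  by have := congr1 (@complex.Re R) ht; rewrite ReD.
apply/matrixP => a b; rewrite summxE sum3C !mxE.
case: (ord2E a) => ->; case: (ord2E b) => ->;
  rewrite /pauli /sigma1 /sigma2 /sigma3 /= ?mxE /=;
  apply: cext; rewrite ?cE /=; lra.
Qed.


Lemma qform2 (A : 'M[C]_2) (v : 'cV[C]_2) :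
  (adjmx v *m A *m v) 0 0 =
  Num.conj (v 0 0) * A 0 0 * v 0 0 + Num.conj (v 0 0) * A 0 1 * v 1 0
  + Num.conj (v 1 0) * A 1 0 * v 0 0 + Num.conj (v 1 0) * A 1 1 * v 1 0.
Proof.
rewrite mxE sum2 !mxE !sum2 !mxE.
rewrite !mulrDl; ring.
Qed.

Lemma bloch_norm (s : 'M[C]_2) : density s -> eucl (bl s) <= 1.
Proof.
move=> [hp ht]; have [h1 h2 h3 h4] := herm2 hp.
move: ht; rewrite trE2 => ht.
have hr : complex.Re (s 0 0) + complex.Re (s 1 1) = 1.
  by have := congr1 (@complex.Re R) ht; rewrite ReD.
set x := complex.Re (s 0 0) in hr *; set y := complex.Re (s 1 1) in hr *.
set u := complex.Re (s 1 0) in h3 *; set w := complex.Im (s 1 0) in h4 *.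
have q1 := hp (\col_(a < 2) (if (a : nat) == 0%N then - s 0 1 else s 0 0)).
have q2 := hp (\col_(a < 2) (if (a : nat) == 0%N then s 1 1 else - s 1 0)).
rewrite qform2 !mxE /= in q1; rewrite qform2 !mxE /= in q2.
move: q1 q2 => /ge0C [_ q1] /ge0C [_ q2].
move: q1 q2; rewrite !cE h1 h2 h3 h4 -/x -/y -/u -/w => q1 q2.
have d0 : 0 <= x * y - u ^+ 2 - w ^+ 2 by nra.
rewrite euclE !mxE /= -[X in _ <= X]sqrtr1 ler_sqrt ?ler01 //.
nra.
Qed.


Lemma conjM (x y : C) : Num.conj (x * y) = Num.conj x * Num.conj y.
Proof. exact: rmorphM. Qed.
Lemma conj_sum r (G : 'I_r -> C) : Num.conj (\sum_(k < r) G k) = \sum_(k < r) Num.conj (G k).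
Proof. exact: rmorph_sum. Qed.

Lemma herm_tens (X Y : 'M[C]_2) : herm X -> herm Y -> herm (X *t Y).
Proof.
move=> hX hY kk ll; rewrite -[kk]mxtens_unindexK -[ll]mxtens_unindexK.
move: (mxtens_unindex kk) (mxtens_unindex ll) => [a b] [c d].
by rewrite !tensmxE conjM -hX -hY.
Qed.

Lemma pauli_herm i : herm (pauli R i).
Proof.
move=> a b.
case: i => [[|[|[|//]]] ?]; case: (ord2E a) => ->; case: (ord2E b) => ->;
  rewrite /pauli /sigma1 /sigma2 /sigma3 /= !mxE /=;
  apply: cext; rewrite ?cE /=; lra.
Qed.

Lemma tr_herm_real n (A B : 'M[C]_n) : herm A -> herm B -> complex.Im (\tr (A *m B)) = 0.
Proof.
move=> hA hB.
have e : Num.conj (\tr (A *m B)) = \tr (A *m B).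
  rewrite /mxtrace conj_sum.
  under eq_bigr do rewrite mxE conj_sum.
  under eq_bigr do under eq_bigr do rewrite conjM -hA -hB.
  rewrite exchange_big /=; apply: eq_bigr => i _; rewrite mxE.
  by apply: eq_bigr => j _; rewrite mulrC.
by have := congr1 (@complex.Im R) e; rewrite ImJ => h; lra.
Qed.

Lemma F0r tau X : F tau X 0 = 0.
Proof. by rewrite /F tensmx0 mulmx0 mxtrace0. Qed.

Lemma F_pauli tau : density tau ->
  forall i j, F tau (pauli R i) (pauli R j) = ((corr tau i j)%:C)%C.
Proof.
move=> [hp _] i j; apply: cext; first by rewrite /corr mxE.
rewrite ImC; apply: tr_herm_real; first exact: psd_herm.
by apply: herm_tens; apply: pauli_herm.
Qed.

Lemma F11 tau : F tau 1%:M 1%:M = \tr tau.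
Proof. by rewrite /F tens11 mulmx1. Qed.


Lemma tr_sum n r (G : 'I_r -> 'M[C]_n) : \tr (\sum_(k < r) G k) = \sum_(k < r) \tr (G k).
Proof. exact: raddf_sum. Qed.

Lemma rCM (a b : R) : ((a * b)%:C = a%:C * b%:C)%C.
Proof. exact: rmorphM. Qed.
Lemma rCD (a b : R) : ((a + b)%:C = a%:C + b%:C)%C.
Proof. exact: rmorphD. Qed.
Lemma rCsum r (G : 'I_r -> R) : ((\sum_(k < r) G k)%:C = \sum_(k < r) (G k)%:C)%C.
Proof. exact: rmorph_sum. Qed.
Lemma rCn n : ((n%:R : R)%:C = n%:R)%C.
Proof. exact: rmorph_nat. Qed.
Lemma rCV (a : R) : ((a^-1)%:C = (a%:C)^-1)%C.
Proof. exact: fmorphV. Qed.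

Lemma two_neq0 : (2%:R : C) != 0.
Proof. by rewrite pnatr_eq0. Qed.

Lemma main (tau : 'M[C]_(2 * 2)) :
  density tau ->
  forall Psi : 'M[C]_2 -> 'M[C]_2,
    quantum_channel Psi -> unital Psi -> entanglement_breaking Psi ->
    \tr (tau *m choi Psi) <= ((1 + opnorm (corr tau)) / 2)%:C%C.
Proof.
move=> htau Psi [lin cp tp] un eb.
have [m [p [s [w [hp hsw hdec]]]]] := eb _ density_Pplus.
pose q k := 2%:R * p k.
have hJ : choi Psi = \sum_k q k *: (s k *t w k).
  rewrite /choi -[Pplus R]scale1r -(mulfV two_neq0) -scalerA (lift_mapZ lin) hdec.
  rewrite scaler_sumr; apply: eq_bigr => k _; by rewrite scalerA.
have ts k : \tr (s k) = 1 by case: (hsw k) => [[_ ->] _].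
have tw k : \tr (w k) = 1 by case: (hsw k) => [_ [_ ->]].
have [Hs Hw] := marginals lin tp un ts tw hJ.
pose r k := 2 * complex.Re (p k).
have hq k : q k = (r k)%:C%C.
  by rewrite /q /r (ge0_real (hp k)) rmorphM rmorph_nat.
have r0 k : 0 <= r k.
  by rewrite /r; apply: mulr_ge0 => //; case: (ge0C (hp k)).
have sumq : \sum_k q k = 2%:R.
  have := congr1 mxtrace Hs; rewrite tr_sum mxtrace1 => <-.
  by apply: eq_bigr => k _; rewrite mxtraceZ ts mulr1.
have sumr : \sum_k r k = 2.
  have := congr1 (@complex.Re R) sumq.
  under eq_bigr do rewrite hq.
  by rewrite -rmorph_sum ReC Ren.
pose A k := 2%:R *: s k - 1%:M.
pose B k := 2%:R *: w k - 1%:M.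
have sA : \sum_k q k *: A k = 0.
  rewrite /A; under eq_bigr do rewrite scalerBr scalerA mulrC -scalerA.
  by rewrite sumrB -scaler_sumr Hs -scaler_suml sumq subrr.
have sB : \sum_k q k *: B k = 0.
  rewrite /B; under eq_bigr do rewrite scalerBr scalerA mulrC -scalerA.
  by rewrite sumrB -scaler_sumr Hw -scaler_suml sumq subrr.
have sk k : s k = (2%:R)^-1 *: (1%:M + A k).
  by rewrite /A addrC subrK scalerA mulVf ?two_neq0 // scale1r.
have wk k : w k = (2%:R)^-1 *: (1%:M + B k).
  by rewrite /B addrC subrK scalerA mulVf ?two_neq0 // scale1r.
pose t k := \sum_(i < 3) \sum_(j < 3) bl (s k) i 0 * bl (w k) j 0 * corr tau i j.
have FAB k : F tau (A k) (B k) = (t k)%:C%C.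
  have [hsd hwd] := hsw k.
  rewrite /A /B (bloch_decomp hsd) (bloch_decomp hwd) Fsuml.
  rewrite /t rCsum; apply: eq_bigr => i _.
  rewrite FZl Fsumr mulr_sumr rCsum; apply: eq_bigr => j _.
  by rewrite FZr (F_pauli htau) !rCM mulrA.
have tle k : t k <= opnorm (corr tau).
  have [hsd hwd] := hsw k.
  exact: bilin_le (bloch_norm hsd) (bloch_norm hwd).
clearbody A B.
have Htr : \tr (tau *m choi Psi)
    = \sum_k (2%:R)^-1 * (2%:R)^-1 * (q k * F tau 1%:M 1%:M + q k * F tau (A k) 1%:M
       + q k * F tau 1%:M (B k) + q k * F tau (A k) (B k)).
  rewrite hJ mulmx_sumr tr_sum; apply: eq_bigr => k _.
  rewrite -scalemxAr mxtraceZ.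
  change (\tr (tau *m (s k *t w k))) with (F tau (s k) (w k)).
  rewrite (sk k) (wk k) !FZl !FZr !FDl !FDr; ring.
have e1 : \sum_k q k * F tau (A k) 1%:M = 0.
  transitivity (F tau (\sum_k q k *: A k) 1%:M); last by rewrite sA F0l.
  rewrite Fsuml; apply: eq_bigr => k _; by rewrite FZl.
have e2 : \sum_k q k * F tau 1%:M (B k) = 0.
  transitivity (F tau 1%:M (\sum_k q k *: B k)); last by rewrite sB F0r.
  rewrite Fsumr; apply: eq_bigr => k _; by rewrite FZr.
have e3 : \sum_k q k * F tau 1%:M 1%:M = 2%:R.
  by rewrite -mulr_suml sumq F11; case: htau => _ ->; rewrite mulr1.
have e4 : \sum_k q k * F tau (A k) (B k) = (\sum_k r k * t k)%:C%C.
  rewrite rCsum; apply: eq_bigr => k _; by rewrite FAB hq rCM.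
rewrite Htr -mulr_sumr !big_split /= e1 e2 e3 e4 !addr0.
rewrite -(rCn 2) -rCD -!rCV -!rCM lecR.
have : \sum_k r k * t k <= \sum_k r k * opnorm (corr tau).
  by apply: ler_sum => k _; apply: ler_wpM2l.
rewrite -mulr_suml sumr => h.
lra.
Qed.

End Cplx.

Unset Implicit Arguments.

Theorem proposition3 (R : realType) (tau : 'M[R[i]]_(2 * 2)) :
  density tau ->
  forall Psi : 'M[R[i]]_2 -> 'M[R[i]]_2,
    quantum_channel Psi -> unital Psi -> entanglement_breaking Psi ->
    \tr (tau *m choi Psi) <= ((1 + opnorm (corr tau)) / 2)%:C%C.
Proof. exact: main. Qed.
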